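(* For every prime $p\geq 17$, the group $PSL_2(p)$ does not satisfy the Amit–Vishne condition: there exist $g,h\in PSL_2(p)$ with $\langle g\rangle=\langle h\rangle$ such that no automorphism of $PSL_2(p)$ maps $g$ to $h$.
   Context: A finite group $G$ satisfies the Amit–Vishne condition if whenever $g,h\in G$ satisfy $\langle g\rangle=\langle h\rangle$, there is $\alpha\in\mathrm{Aut}(G)$ with $\alpha(g)=h$. *)

(* Defs.v *)
From HB Require Import structures.
From mathcomp Require Import all_boot all_order all_algebra all_fingroup all_solvable matrix zmodp.
Set Implicit Arguments. Unset Strict Implicit. Unset Printing Implicit Defensive.
Import GRing.Theory.

Local Open Scope group_scope.

Definition SL2 (p : nat) : {set {'GL_2['F_p]}} :=
  [set u : {'GL_2['F_p]} | (\det (GLval u) == 1)%R].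

Lemma SL2_group_set p : group_set (SL2 p).
Proof.
apply/group_setP; split.
  by rewrite inE GL_1E det1.
move=> x y; rewrite !inE GL_MxE => /eqP hx /eqP hy.
by rewrite det_mulmx hx hy mulr1.
Qed.

Canonical SL2_group p := Group (SL2_group_set p).

Definition PSL2 (p : nat) := (SL2_group p / 'Z(SL2_group p))%G.

Definition amit_vishne (gT : finGroupType) (G : {group gT}) : Prop :=
  forall g h, g \in G -> h \in G -> <[g]> = <[h]> ->
    exists2 a, a \in Aut G & a g = h.

(* Main.v *)
Require Import Defs.
From mathcomp Require Import all_boot all_order all_algebra all_fingroup all_solvable all_field.
From mathcomp Require Import ring lra.
From mathcomp Require Import zify.
Set Implicit Arguments. Unset Strict Implicit. Unset Printing Implicit Defensive.
Import GRing.Theory.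
Local Open Scope ring_scope.


Definition M2 {R : comNzRingType} (a b c d : R) : 'M[R]_2 :=
  \matrix_(i < 2, j < 2) if i == 0 then (if j == 0 then a else b)
                          else (if j == 0 then c else d).

Lemma ord2 (i : 'I_2) : i = 0 \/ i = 1.
Proof. by case: i => [[|[|//]]] ?; [left|right]; apply: val_inj. Qed.

Lemma M2E {R : comNzRingType} (a b c d : R) : [/\ M2 a b c d 0 0 = a, M2 a b c d 0 1 = b,
   M2 a b c d 1 0 = c & M2 a b c d 1 1 = d].
Proof. by rewrite !mxE. Qed.

Lemma M2_eta {R : comNzRingType} (A : 'M[R]_2) : A = M2 (A 0 0) (A 0 1) (A 1 0) (A 1 1).
Proof.
apply/matrixP => i j; rewrite mxE.
by case: (ord2 i) => ->; case: (ord2 j) => ->.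
Qed.

Lemma M2_inj {R : comNzRingType} (a b c d a' b' c' d' : R) : M2 a b c d = M2 a' b' c' d' ->
  [/\ a = a', b = b', c = c' & d = d'].
Proof.
move=> E; have := congr1 (fun A : 'M_2 => (A 0 0, A 0 1, A 1 0, A 1 1)) E.
by rewrite !mxE /= => -[].
Qed.

Lemma mulM2 {R : comNzRingType} (a b c d a' b' c' d' : R) :
  M2 a b c d *m M2 a' b' c' d' =
  M2 (a*a'+b*c') (a*b'+b*d') (c*a'+d*c') (c*b'+d*d').
Proof.
apply/matrixP => i j; rewrite !mxE !big_ord_recl big_ord0 !mxE addr0 /=.
by case: (ord2 i) => ->; case: (ord2 j) => ->.
Qed.

Lemma addM2 {R : comNzRingType} (a b c d a' b' c' d' : R) :
  M2 a b c d + M2 a' b' c' d' = M2 (a+a') (b+b') (c+c') (d+d').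
Proof.
apply/matrixP => i j; rewrite !mxE.
by case: (ord2 i) => ->; case: (ord2 j) => ->.
Qed.

Lemma oppM2 {R : comNzRingType} (a b c d : R) : - M2 a b c d = M2 (-a) (-b) (-c) (-d).
Proof.
apply/matrixP => i j; rewrite !mxE.
by case: (ord2 i) => ->; case: (ord2 j) => ->.
Qed.

Lemma scaleM2 {R : comNzRingType} (k a b c d : R) : k *: M2 a b c d = M2 (k*a) (k*b) (k*c) (k*d).
Proof.
apply/matrixP => i j; rewrite !mxE.
by case: (ord2 i) => ->; case: (ord2 j) => ->.
Qed.

Lemma scalarM2 {R : comNzRingType} (k : R) : k%:M = M2 k 0 0 k :> 'M[R]_2.
Proof.
apply/matrixP => i j; rewrite !mxE.
by case: (ord2 i) => ->; case: (ord2 j) => ->.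
Qed.

Lemma detM2 {R : comNzRingType} (a b c d : R) : \det (M2 a b c d) = a * d - b * c.
Proof.
rewrite (expand_det_row _ 0) !big_ord_recl big_ord0 addr0.
rewrite /cofactor !det_mx11 !mxE /=.
by rewrite /bump /= expr0 expr1 mul1r mulN1r mulrN.
Qed.
Lemma two_neq0 (F : fieldType) p : p \in [pchar F] -> (2 < p)%N -> (2%:R : F) != 0.
Proof.
move=> chp p2; apply/negP => /eqP h2.
have : (2 \in [pchar F])%N by rewrite unfold_in /= h2 eqxx.
rewrite (pcharf_eq chp) => /eqP p2'. by rewrite -p2' in p2.
Qed.

Lemma detX (R : comNzRingType) (A : 'M[R]_2) n : \det (A ^+ n) = \det A ^+ n.
Proof.
elim: n => [|n IH]; first by rewrite !expr0 det1.
by rewrite !exprS -mulmxE det_mulmx IH.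
Qed.


Lemma CH2 {F : fieldType} (A : 'M[F]_2) :
  A * A = (A 0 0 + A 1 1) *: A - (\det A)%:M.
Proof.
rewrite [in LHS](M2_eta A) [in \det _](M2_eta A) [in _ *: _](M2_eta A).
rewrite -mulmxE mulM2 detM2 scaleM2 scalarM2 oppM2 addM2.
congr M2. all: rewrite ?mxE /=. all: ring.
Qed.

Lemma key {F : fieldType} p (chp : p \in [pchar F]) (p2 : (2 < p)%N) (Y : 'M[F]_2) (s c e : F) (lam : nat) :
  \det Y = 1 -> Y ^+ p = e%:M -> (forall k, Y != k%:M) -> s != 0 ->
  M2 s^-1 0 0 s *m Y *m M2 s 0 0 s^-1 = c%:M *m Y ^+ lam ->
  lam%:R != 1 :> F -> lam%:R = s^-1 * s^-1 \/ lam%:R = s * s.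
Proof.
move=> dY Yp nsc s0 hconj lam1.
have pr : prime p := pcharf_prime chp.
have podd : odd p by case: (even_prime pr) => // p2'; rewrite p2' in p2.
have e2 : e ^+ 2 = 1.
  by have := congr1 (@determinant _ _) Yp; rewrite detX dY expr1n det_scalar.
have ee : e * e = 1 by rewrite -expr2.
have ep : e ^+ p.+1 = 1.
  have h := odd_double_half p.+1; rewrite /= podd /= add0n in h.
  by rewrite -h -muln2 mulnC exprM e2 expr1n.
pose Z := e *: Y.
have Zp : Z ^+ p = 1.
  rewrite /Z exprZn Yp -scalemx1 scalerA -exprSr ep scale1r.
  done.
pose A := Z - 1.
have chM : p \in [pchar 'M[F]_2] by rewrite (pchar_lalg _ ) .
have ZE : Z = 1 + A by rewrite addrC subrK.
clearbody A.
have hF : (A + 1) ^+ p = A ^+ p + 1.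
  by have := pFrobenius_autD_comm chM (commr1 A); rewrite !pFrobenius_autE expr1n.
have Ap : A ^+ p = 0.
  move: Zp; rewrite ZE addrC hF => /eqP; rewrite -subr_eq0 addrK.
  by move/eqP.
have dA : \det A = 0.
  have := congr1 (@determinant _ _) Ap; rewrite detX det0 => /eqP.
  by rewrite expf_eq0 => /andP[_ /eqP].
have AA0 : A * A = (A 0 0 + A 1 1) *: A by rewrite CH2 dA raddf0 subr0.
set t := A 0 0 + A 1 1 in AA0.
have Apow n : A ^+ n.+1 = t ^+ n *: A.
  elim: n => [|n IH]; first by rewrite expr1 expr0 scale1r.
  by rewrite exprSr IH -scalerAl AA0 scalerA -exprSr.
have YZ : Y = e *: Z by rewrite /Z scalerA ee scale1r.
have A0 : A != 0.
  apply/negP => /eqP A0; apply: (negP (nsc e)).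
  have : Z = 1 by rewrite ZE A0 addr0.
  by rewrite YZ => ->; rewrite scalemx1.
have t0 : t = 0.
  move: Ap; rewrite -(prednK (prime_gt0 pr)) Apow => /eqP.
  rewrite scaler_eq0 (negbTE A0) orbF expf_eq0 => /andP[_ /eqP //].
have AA : A * A = 0 by rewrite AA0 t0 scale0r.
have Zn n : Z ^+ n = 1 + n%:R *: A.
  elim: n => [|n IH]; first by rewrite expr0 scale0r addr0.
  rewrite exprSr IH ZE mulrDl !mulrDr !mul1r mulr1 -scalerAl AA scaler0 addr0.
  by rewrite mulrSr scalerDl scale1r (addrC (n%:R *: A)) addrA.
have [a [b [c' [d AE]]]] : exists a b c' d, A = M2 a b c' d.
  by do 4 eexists; exact: M2_eta A.
have ad : a + d = 0 by move: t0; rewrite /t AE !mxE.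
have one : (1 : 'M[F]_2) = M2 1 0 0 1 by rewrite -scalarM2.
move: hconj; rewrite YZ exprZn Zn ZE AE one !scaleM2 !addM2 scalarM2 !scaleM2 !mulM2.
move=> /M2_inj [h1 h2 h3 h4].
rewrite !(mul0r, add0r, addr0, mulr0) in h1 h2 h3 h4.
have e0 : e != 0.
  by apply/eqP => e0; move: ee; rewrite e0 mul0r => /eqP; rewrite eq_sym oner_eq0.
set L := lam%:R in h1 h2 h3 h4 lam1 *.
have E1 : e*(1+a) = (c * e^+lam)*(1+L*a) by rewrite -mulrA -h1; field.
have E4 : e*(1+d) = (c * e^+lam)*(1+L*d) by rewrite -mulrA -h4; field.
have E2 : e*(b*(s^-1*s^-1)) = (c * e^+lam)*(L*b) by rewrite -mulrA -h2; field.
have E3 : e*(c'*(s*s)) = (c * e^+lam)*(L*c') by rewrite -mulrA -h3; field.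
set β := c * e ^+ lam in E1 E2 E3 E4.
have aE : a = -d by apply/eqP; rewrite -addr_eq0 ad.
have two : 2%:R * e = 2%:R * β.
  have -> : 2%:R * e = e*(1+a) + e*(1+d) by rewrite aE; ring.
  by rewrite E1 E4 aE; ring.
have eb : e = β := mulfI (two_neq0 chp p2) two.
rewrite -eb in E1 E2 E3 E4.
have d0 : d = 0.
  have H := mulfI e0 E4.
  have : (L - 1) * d = 0 by transitivity ((1 + L*d) - (1 + d)); [ring | rewrite H subrr].
  by move/eqP; rewrite mulf_eq0 subr_eq0 (negbTE lam1) /= => /eqP.
have a0 : a = 0 by rewrite aE d0 oppr0.
have Hb : b * (s^-1*s^-1 - L) = 0.
  have H := mulfI e0 E2.
  by transitivity (b*(s^-1*s^-1) - L*b); [ring | rewrite H subrr].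
have Hc : c' * (s*s - L) = 0.
  have H := mulfI e0 E3.
  by transitivity (c'*(s*s) - L*c'); [ring | rewrite H subrr].
case: (eqVneq b 0) => [b0|bn0].
  case: (eqVneq c' 0) => [c0|cn0].
    by move: A0; rewrite AE a0 b0 c0 d0 -scalarM2 raddf0 eqxx.
  right; move/eqP: Hc; rewrite mulf_eq0 (negbTE cn0) /= subr_eq0 => /eqP.
  by move=> ->.
left; move/eqP: Hb; rewrite mulf_eq0 (negbTE bn0) /= subr_eq0 => /eqP.
by move=> ->.
Qed.
Lemma exists_k n : (8 <= n)%N -> exists k, [/\ (2 <= k)%N, (k + 2 <= n)%N & coprime n k].
Proof.
move=> n8.
case odn: (odd n).
  by exists 2%N; split; [done|lia|]; rewrite coprime_sym coprime2n odn.
have [m nm] : exists m, n = (m * 2)%N.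
  by exists n./2; rewrite -[LHS](odd_double_half n) odn add0n muln2.
case odm: (odd m).
  exists (m + 2)%N; split; [lia|lia|].
  rewrite nm coprime_sym coprimeMr; apply/andP; split.
    by rewrite /coprime gcdnC gcdnDl gcdnC -/(coprime 2 m) coprime2n odm.
  by rewrite coprime_sym coprime2n oddD odm.
exists (m + 1)%N; split; [lia|lia|].
rewrite nm coprime_sym coprimeMr; apply/andP; split.
  by rewrite addn1 coprimeSn.
by rewrite coprime_sym coprime2n oddD odm.
Qed.


Definition GLof p (M : 'M['F_p]_2) : {'GL_2['F_p]} := insubd (1%g : {'GL_2['F_p]}) M.

Lemma GLofK p (M : 'M['F_p]_2) : \det M = 1 -> GLval (GLof M) = M.
Proof. by move=> dM; rewrite /GLof insubdK // unfold_in /= unitmxE dM unitr1. Qed.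


Lemma GLvalX p (x : {'GL_2['F_p]}) n : GLval (x ^+ n)%g = GLval x ^+ n.
Proof.
elim: n => [|n IH]; first by rewrite expg0 expr0 GL_1E.
by rewrite expgS GL_ME IH exprS.
Qed.

Lemma inSL2 p (M : 'M['F_p]_2) : \det M = 1 -> GLof M \in SL2 p.
Proof. by move=> dM; rewrite inE GLofK // dM eqxx. Qed.

Lemma SL2_det p x : x \in SL2 p -> \det (GLval x) = 1.
Proof. by rewrite inE => /eqP. Qed.

Lemma SL2_norm p x : x \in SL2 p -> x \in 'N('Z(SL2_group p))%g.
Proof. by move=> xS; apply: (subsetP (normal_norm (center_normal _))). Qed.

Lemma detU p : \det (M2 1 1 0 1 : 'M['F_p]_2) = 1.
Proof. by rewrite detM2 mulr1 mulr0 subr0. Qed.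
Lemma detL p : \det (M2 1 0 1 1 : 'M['F_p]_2) = 1.
Proof. by rewrite detM2 mulr1 mul0r subr0. Qed.

Lemma center_scalar p (z : {'GL_2['F_p]}) :
  z \in 'Z(SL2_group p)%g -> exists k, GLval z = k%:M.
Proof.
case/centerP => _ cz.
have hU : commute z (GLof (M2 1 1 0 1)) by apply: cz; apply: inSL2; exact: detU.
have hL : commute z (GLof (M2 1 0 1 1)) by apply: cz; apply: inSL2; exact: detL.
have hU' : (GLval z *m M2 1 1 0 1 = M2 1 1 0 1 *m GLval z).
  by rewrite -{1}(GLofK (detU p)) -GL_MxE hU GL_MxE GLofK // detU.
have hL' : (GLval z *m M2 1 0 1 1 = M2 1 0 1 1 *m GLval z).
  by rewrite -{1}(GLofK (detL p)) -GL_MxE hL GL_MxE GLofK // detL.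
have [a [b [c [d zE]]]] : exists a b c d, GLval z = M2 a b c d.
  by do 4 eexists; exact: M2_eta.
move: hU' hL'; rewrite zE !mulM2 => /M2_inj [u1 u2 u3 u4] /M2_inj [l1 l2 l3 l4].
rewrite !(mulr1, mulr0, mul1r, mul0r, addr0, add0r) in u1 u2 u3 u4 l1 l2 l3 l4.
have c0 : c = 0 by apply/(addrI a); rewrite addr0 -u1.
have b0 : b = 0 by apply/(addrI a); rewrite addr0 l1.
have da : d = a by move: u2; rewrite b0 addr0 add0r.
by exists a; rewrite scalarM2 c0 b0 da.
Qed.

Lemma scalar_center p (y : {'GL_2['F_p]}) k :
  y \in SL2 p -> GLval y = k%:M -> y \in 'Z(SL2_group p)%g.
Proof.
move=> yS yk; apply/centerP; split => // w _.
apply: val_inj; change (GLval (y * w)%g = GLval (w * y)%g).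
by rewrite !GL_MxE yk scalar_mxC.
Qed.


Lemma oneM2 (R : comNzRingType) : (1 : 'M[R]_2) = M2 1 0 0 1.
Proof. by rewrite -scalarM2. Qed.

Lemma DmX (F : fieldType) (s : F) n :
  (M2 s 0 0 s^-1) ^+ n = M2 (s ^+ n) 0 0 (s ^+ n)^-1.
Proof.
elim: n => [|n IH]; first by rewrite !expr0 invr1 oneM2.
rewrite exprS IH -mulmxE mulM2; congr M2; rewrite ?exprS ?invfM; ring.
Qed.

Lemma UX (F : fieldType) n : (M2 1 1 0 1 : 'M[F]_2) ^+ n = M2 1 n%:R 0 1.
Proof.
elim: n => [|n IH]; first by rewrite expr0 oneM2.
rewrite exprS IH -mulmxE mulM2; congr M2; rewrite ?mulrS; ring.
Qed.

Lemma GLV_D p (X : {'GL_2['F_p]}) s : s != 0 -> GLval X = M2 s 0 0 s^-1 ->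
  GLval (X^-1)%g = M2 s^-1 0 0 s.
Proof.
move=> s0 XE; rewrite GL_VE; apply: (mulrI (GL_unit X)).
rewrite mulrV ?GL_unit // XE -mulmxE mulM2 oneM2; by congr M2; try field.
Qed.

Lemma cosetJ p (X Y : {'GL_2['F_p]}) : X \in SL2 p -> Y \in SL2 p ->
  coset 'Z(SL2_group p)%G (X ^ Y)%g =
  (coset 'Z(SL2_group p)%G X ^ coset 'Z(SL2_group p)%G Y)%g.
Proof. by move=> XS YS; rewrite morphJ // SL2_norm. Qed.

Lemma cosetX p (X : {'GL_2['F_p]}) m : X \in SL2 p ->
  coset 'Z(SL2_group p)%G (X ^+ m)%g = (coset 'Z(SL2_group p)%G X ^+ m)%g.
Proof. by move=> XS; rewrite morphX // SL2_norm. Qed.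

Lemma SL2X p (X : {'GL_2['F_p]}) m : X \in SL2 p -> (X ^+ m)%g \in SL2 p.
Proof. by rewrite !inE GLvalX detX => /eqP ->; rewrite expr1n. Qed.

Lemma SL2J p (X Y : {'GL_2['F_p]}) : X \in SL2 p -> Y \in SL2 p -> (X ^ Y)%g \in SL2 p.
Proof.
rewrite !inE conjgE !GL_MxE GL_VE => /eqP dX /eqP dY.
by rewrite !det_mulmx det_inv dX dY invr1 !mulr1.
Qed.
Lemma main_aux (p : nat) : prime p -> (17 <= p)%N -> ~ amit_vishne (PSL2 p).
Proof.
move=> pr p17 AV.
have podd : odd p by case: (even_prime pr) => // p2; rewrite p2 in p17.
set n := p.-1./2.
have pE : p = p.-1.+1 by rewrite prednK // prime_gt0.
have op : odd p.-1 = false by move: podd; rewrite {1}pE /= => /negbTE.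
have pn : p.-1 = (n * 2)%N by rewrite muln2 /n -{1}(odd_double_half p.-1) op add0n.
have n8 : (8 <= n)%N by clear -p17 pn; lia.
have [k [k2 kn cnk]] := exists_k n8.
have [u hu] : exists u : {unit 'F_p}, #[u]%g = p.-1.
  have /cyclicP [u hu] := field_unit_group_cyclic [set: {unit 'F_p}]%G.
  by exists u; rewrite /order -hu card_finField_unit card_Fp.
set t : 'F_p := val u.
have t0 : t != 0 by have := valP u; rewrite unitfE.
have tpow j : (t ^+ j == 1) = (p.-1 %| j)%N.
  rewrite -hu order_dvdn; apply/eqP/eqP => tj.
    by apply: val_inj; rewrite FinRing.val_unitX tj.
  by rewrite /t -FinRing.val_unitX tj.
clearbody t.
set Dm := (M2 t 0 0 t^-1 : 'M['F_p]_2).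
have dD : \det Dm = 1 by rewrite detM2 mulfV // mulr0 subr0.
have [D DE DS] : exists2 D : {'GL_2['F_p]}, GLval D = Dm & D \in SL2 p.
  by exists (GLof Dm); [exact: GLofK | exact: inSL2].
set Zc := 'Z(SL2_group p)%G.
set g := coset Zc D.
set h := (g ^+ k)%g.
have gG : g \in PSL2 p := mem_quotient _ DS.
have hG : h \in PSL2 p := groupX _ gG.
have tn : t ^+ n = -1.
  have : (t ^+ n) ^+ 2 == 1 by rewrite -exprM tpow pn.
  rewrite sqrf_eq1 => /orP[|/eqP //]; rewrite tpow pn => /dvdn_leq.
  by move=> /(_ _); clear -n8; lia.
have gn : (g ^+ n)%g = 1%g.
  rewrite /g -(cosetX n DS); apply: coset_id.
  apply: (@scalar_center _ _ (-1)); first exact: SL2X.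
  by rewrite GLvalX DE DmX tn invrN1 scalarM2.
have cyc : <[g]>%g = <[h]>%g.
  apply/eqP; rewrite -/(generator _ _) generator_coprime.
  by rewrite (coprime_dvdl _ cnk) // order_dvdn gn.
have [a aA agh] := AV g h gG hG cyc.
set Um := (M2 1 1 0 1 : 'M['F_p]_2).
have [U UE US] : exists2 U : {'GL_2['F_p]}, GLval U = Um & U \in SL2 p.
  by exists (GLof Um); [exact: GLofK (detU p) | exact: inSL2 (detU p)].
set x := coset Zc U.
have xG : x \in PSL2 p := mem_quotient _ US.
have [lam lamE] : exists lam : nat, lam%:R = t^-1 * t^-1 :> 'F_p.
  by exists (nat_of_ord (t^-1 * t^-1)); rewrite natr_Zp.
have Up : (U ^+ p)%g = 1%g.
  apply: val_inj; change (GLval (U ^+ p)%g = 1).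
  by rewrite GLvalX UE UX (pchar_Fp_0 pr) oneM2.
have xp : (x ^+ p)%g = 1%g by rewrite /x -(cosetX p US) Up morph1.
have x1 : x != 1%g.
  apply/negP => /eqP /(coset_idr (SL2_norm US)) /center_scalar [c].
  rewrite UE scalarM2 => /M2_inj [_ h10 _ _].
  by move: (@oner_neq0 'F_p); rewrite h10 eqxx.
have UD : (U ^ D)%g = (U ^+ lam)%g.
  apply: val_inj; change (GLval (D^-1 * (U * D))%g = GLval (U ^+ lam)%g).
  rewrite !GL_MxE. rewrite (GLV_D t0 DE). rewrite GLvalX. rewrite UE DE. rewrite UX.
  by rewrite !mulM2 lamE; congr M2; field.
have xg : (x ^ g)%g = (x ^+ lam)%g.
  have := congr1 (coset Zc) UD.
  rewrite (cosetJ US DS).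
  rewrite (cosetX _ US).
  done.
have a1 : a 1%g = 1%g by rewrite -(autmE aA) morph1.
set y := a x.
have yG : y \in PSL2 p := Aut_closed aA xG.
have yp : (y ^+ p)%g = 1%g by rewrite /y -(autmE aA) -morphX // xp morph1.
have y1 : y != 1%g.
  apply: contra x1 => /eqP ya; apply/eqP; apply: (@perm_inj _ a).
  by rewrite a1; exact: ya.
have yh : (y ^ h)%g = (y ^+ lam)%g.
  by rewrite /y -agh -(autmE aA) -morphJ // xg morphX.
have [Y YS yE] : exists2 Y, Y \in SL2 p & y = coset Zc Y.
  move: yG => /morphimP [Y _ YS ->]; by exists Y.
set s := t ^+ k.
have s0 : s != 0 by rewrite expf_neq0.
have HS : (D ^+ k)%g \in SL2 p := SL2X k DS.
have hE : h = coset Zc (D ^+ k)%g by rewrite /h /g (cosetX k DS).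
have HE : GLval (D ^+ k)%g = M2 s 0 0 s^-1 by rewrite GLvalX DE DmX.
have [e Ye] : exists e, GLval Y ^+ p = e%:M.
  have : (Y ^+ p)%g \in Zc.
    apply: (coset_idr (SL2_norm (SL2X p YS))).
    by rewrite (cosetX p YS) -yE yp.
  by case/center_scalar => e; rewrite GLvalX => ?; exists e.
have Yns : forall c, GLval Y != c%:M.
  move=> c; apply: contra y1 => /eqP Yc; rewrite yE; apply/eqP.
  by apply: coset_id; exact: scalar_center YS Yc.
have [c Yc] : exists c, M2 s^-1 0 0 s *m GLval Y *m M2 s 0 0 s^-1 = c%:M *m GLval Y ^+ lam.
  have : coset Zc (Y ^ (D ^+ k))%g = coset Zc (Y ^+ lam)%g.
    by rewrite (cosetJ YS HS) -hE (cosetX _ YS) -yE.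
  case/kercoset_rcoset; [exact: SL2_norm (SL2J YS HS) | exact: SL2_norm (SL2X lam YS) |].
  move=> z zZ YHz; case: (center_scalar zZ) => c zc; exists c.
  rewrite conjgE in YHz; have H1 := congr1 (@GLval 2 'F_p) YHz.
  by rewrite !GL_MxE (GLV_D s0 HE) HE zc GLvalX mulmxA in H1.
have lam1 : lam%:R != 1 :> 'F_p.
  rewrite lamE; apply/eqP => tt.
  have : t ^+ 2 == 1.
    have := congr1 GRing.inv tt; rewrite invfM !invrK invr1 => <-.
    by rewrite expr2.
  rewrite tpow pn => /(dvdn_leq (isT : (0 < 2)%N)); clear -n8; lia.
have p2 : (2 < p)%N by clear -p17; lia.
have := key (pchar_Fp pr) p2 (SL2_det YS) Ye Yns s0 Yc lam1.
rewrite lamE => -[E|E].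
  have E' : t * t = s * s by have := congr1 GRing.inv E; rewrite !invfM !invrK.
  have : t ^+ (k * 2 - 2) == 1.
    have tt0 : t ^+ 2 != 0 by rewrite expf_neq0.
    apply/eqP; apply: (mulIf tt0); rewrite mul1r -exprD subnK; last by clear -k2; lia.
    by rewrite exprM -/s !expr2 E'.
  rewrite tpow pn (_ : (k * 2 - 2 = (k - 1) * 2)%N); last by clear -k2; lia.
  rewrite dvdn_pmul2r // => /dvdn_leq; clear -k2 kn; move=> /(_ _); lia.
have : t ^+ (k * 2 + 2) == 1.
  by apply/eqP; rewrite exprD exprM -/s !expr2 -E; field.
rewrite tpow pn (_ : (k * 2 + 2 = (k + 1) * 2)%N); last by clear -k2; lia.
rewrite dvdn_pmul2r // => /dvdn_leq; clear -k2 kn; move=> /(_ _); lia.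
Qed.

Local Close Scope ring_scope.

Theorem mainTheorem8 (p : nat) : prime p -> 17 <= p -> ~ amit_vishne (PSL2 p).
Proof. exact: main_aux. Qed.
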